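(* Let $\mathbf v_1$ and $\mathbf v_2$ be words. If the set of letters occurring in $\mathbf v_2$ is $\{x_1,x_2,\dots,x_n\}$ (with $x_1,\dots,x_n$ distinct) and each of these letters occurs in $\mathbf v_1$, then the identity $\mathbf v_1\mathbf v_2\approx\mathbf v_1x_1x_2\cdots x_n$ holds in the variety $\mathbf O$.
   Context: Words are elements of the free monoid over a countably infinite alphabet. $\mathbf O$ is the monoid variety defined by the identities $x^2y^2\approx y^2x^2$ and $xzxyxty\approx xzyxty$. *)

(* Defs.v *)
From mathcomp Require Import all_boot.
Set Implicit Arguments. Unset Strict Implicit. Unset Printing Implicit Defensive.

Definition word := seq nat.

Record monoid := Monoid {
  carrier :> Type;
  mop : carrier -> carrier -> carrier;
  mone : carrier;
  mopA : forall a b c, mop a (mop b c) = mop (mop a b) c;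
  mop1l : forall a, mop mone a = a;
  mop1r : forall a, mop a mone = a
}.

Definition eval (M : monoid) (f : nat -> M) (w : word) : M :=
  foldr (fun a r => mop (f a) r) (mone M) w.

Definition satisfies (M : monoid) (u v : word) : Prop :=
  forall f : nat -> M, eval f u = eval f v.

(* Letters x = 0, y = 1, z = 2, t = 3. *)
(* M belongs to the variety O defined by x^2y^2 ~ y^2x^2 and xzxyxty ~ xzyxty. *)
Definition in_O (M : monoid) : Prop :=
  satisfies M [:: 0; 0; 1; 1] [:: 1; 1; 0; 0] /\
  satisfies M [:: 0; 2; 0; 1; 0; 3; 1] [:: 0; 2; 1; 0; 3; 1].

Definition holds_in_O (u v : word) : Prop :=
  forall M : monoid, in_O M -> satisfies M u v.

(* Main.v *)
Require Import Defs.
From mathcomp Require Import all_boot.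

Section S.
Variable M : monoid.
Hypothesis HM : in_O M.
Variable f : nat -> M.

Lemma eval_cat (u v : word) : eval f (u ++ v) = mop (eval f u) (eval f v).
Proof.
elim: u => [|c u IH] /=; first by rewrite mop1l.
by rewrite IH mopA.
Qed.

Lemma L1 w a t : a \in w -> eval f (w ++ a :: t) = eval f (w ++ a :: a :: t).
Proof.
case/splitPr=> p q.
rewrite -!catA /= !eval_cat /= !eval_cat /=.
congr (mop _ _).
have := (proj2 HM) (fun n => match n with 0 => f a | 1 => mone M | 2 => eval f q | _ => eval f t end).
rewrite /eval /= -/(eval f q) -/(eval f t) !mop1l !mop1r => H.
by rewrite H.
Qed.

Lemma sq w a b t : eval f (w ++ [:: a; a; b; b] ++ t) = eval f (w ++ [:: b; b; a; a] ++ t).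
Proof.
rewrite !eval_cat; congr (mop _ (mop _ _)).
have := (proj1 HM) (fun n => if n == 0 then f a else f b).
by rewrite /eval /=.
Qed.

Lemma L2 w a b t : a \in w -> b \in w ->
  eval f (w ++ a :: b :: t) = eval f (w ++ b :: a :: t).
Proof.
move=> aw bw.
rewrite L1 //.
rewrite -[a :: a :: b :: t]/([:: a; a] ++ b :: t) catA L1; last by rewrite mem_cat bw.
rewrite -catA /= -[[:: a, a, b, b & t]]/([:: a; a; b; b] ++ t) sq /=.
rewrite -[[:: b, b, a, a & t]]/([:: b; b] ++ a :: a :: t) catA -L1; last by rewrite mem_cat aw.
by rewrite -catA /= -L1.
Qed.

Lemma move s w a t : a \in w -> {subset s <= w} ->
  eval f (w ++ s ++ a :: t) = eval f (w ++ a :: s ++ t).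
Proof.
elim: s w => [|c s IH] w aw sw //=.
rewrite -cat_rcons IH; last first.
- by move=> y ys; rewrite mem_rcons in_cons sw ?orbT // in_cons ys orbT.
- by rewrite mem_rcons in_cons aw orbT.
rewrite cat_rcons L2 //; last by apply: sw; rewrite in_cons eqxx.
Qed.

Lemma R s w a : a \in w -> {subset s <= w} ->
  eval f (w ++ a :: s) = eval f (w ++ a :: filter (predC1 a) s).
Proof.
elim: s w => [|c s IH] w aw sw //=.
have cw : c \in w by apply: sw; rewrite in_cons eqxx.
case: eqP => [->|/eqP ca] /=.
- rewrite -L1 // IH // => y ys; apply: sw; by rewrite in_cons ys orbT.
- rewrite L2 // -cat_rcons IH; last first.
  + by move=> y ys; rewrite mem_rcons in_cons sw ?orbT // in_cons ys orbT.
  + by rewrite mem_rcons in_cons aw orbT.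
  by rewrite cat_rcons L2.
Qed.

Lemma main xs : forall u w, uniq xs -> (forall a, (a \in u) = (a \in xs)) ->
  {subset xs <= w} -> eval f (w ++ u) = eval f (w ++ xs).
Proof.
elim: xs => [|x xs IH] u w /= uq eq sub.
- case: u eq => [|c u] // eq; by have := eq c; rewrite in_cons eqxx.
case/andP: uq => xn uq.
have xu : x \in u by rewrite eq in_cons eqxx.
have uw : {subset u <= w} by move=> y; rewrite eq => /sub.
case/splitPr: xu uw eq => s1 s2 uw eq.
have xw : x \in w by apply: sub; rewrite in_cons eqxx.
rewrite move //; last by move=> y ys; apply: uw; rewrite mem_cat ys.
rewrite R //; last first.
  move=> y; rewrite mem_cat => /orP[ys|ys]; apply: uw; rewrite mem_cat ?ys //.
  by rewrite in_cons ys !orbT.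
rewrite -!cat_rcons IH //.
- move=> a; rewrite mem_filter /=.
  case: (eqVneq a x) => [->|ax] /=; first by rewrite (negbTE xn).
  have := eq a; rewrite !mem_cat !in_cons (negbTE ax) /= => ->.
  by [].
- by move=> y ys; rewrite mem_rcons in_cons sub ?orbT // in_cons ys orbT.
Qed.
End S.

Theorem lemma3p4 (v1 v2 : word) (xs : seq nat) :
  uniq xs ->
  (forall a, (a \in v2) = (a \in xs)) ->
  (forall a, a \in xs -> a \in v1) ->
  holds_in_O (v1 ++ v2) (v1 ++ xs).
Proof.
move=> uq eq sub M HM f.
exact: main.
Qed.
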